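(* Let $\pi_0:Z_0\to Z$ be the minimal resolution of a log terminal surface singularity, with exceptional curves $E_1,\dots,E_r$ generating $\mathbf{E}_0$, and $b_j=-E_j^2$. Let $g:\mathbf{E}_0\to\mathbb{Q}$, $g(E)=-E^2+\ell(E)$, with $\ell$ linear and $\ell(E_i)\le0$ for all $i$. Let $D=\sum_{j\in I}n_jE_j$ ($I\subseteq\{1,\dots,r\}$, $n_j>0$) be an effective exceptional divisor with connected support, put $m(D)=2+\sum_{j\in I}(b_j-2)$, and define $D=D_1+D_2$ as follows: if $m(D)=2$, $D_1=D$ and $D_2=0$; if $m(D)>2$, let $n=\min\{n_i: i\in I,\ b_i>2\}$, $D_1=\gcd(nD_{\mathrm{num}},D)$ and $D_2=D-D_1$. Then: (1) $D_1\cdot D_2\le0$; (2) if $g(D_{\mathrm{num}})>0$ then $g(D_1)>0$; (3) for each connected component $C$ of $D_2$, $m(C)<m(D)$.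
   Context: $D_{\mathrm{num}}$ is the numerical cycle of $\operatorname{supp}D$: the minimal nonzero effective divisor $F$ supported on $\operatorname{supp}D$ with $F\cdot E_i\le0$ for every $E_i\subseteq\operatorname{supp}D$. For effective divisors $F=\sum f_iE_i$, $F'=\sum f'_iE_i$, $\gcd(F,F')=\sum\min(f_i,f'_i)E_i$. For a connected effective exceptional divisor $C$ with support $\bigcup_{j\in I'}E_j$, $m(C)=2+\sum_{j\in I'}(b_j-2)$. *)

(* Defs.v *)
(* Combinatorial model of the minimal resolution of a
   log terminal surface singularity: exceptional curves E_0..E_{r-1}
   indexed by 'I_r, self-intersections -b i, dual graph adj. *)
From mathcomp Require Import all_boot all_order all_algebra.
Set Implicit Arguments. Unset Strict Implicit. Unset Printing Implicit Defensive.
Import Order.TTheory GRing.Theory Num.Theory.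
Local Open Scope ring_scope.

Definition inter (r : nat) (b : 'I_r -> nat) (adj : rel 'I_r) (i j : 'I_r) : int :=
  if i == j then - (b i)%:Z else if adj i j then 1 else 0.

(* intersection form on E_0 = integer combinations of the E_i *)
Definition idot (r : nat) (b : 'I_r -> nat) (adj : rel 'I_r)
    (x y : 'I_r -> int) : int :=
  \sum_(i < r) \sum_(j < r) x i * y j * inter b adj i j.

Definition ecurve (r : nat) (i : 'I_r) : 'I_r -> int := fun j => (j == i)%:Z.

(* effective divisors are nat-valued coefficient vectors *)
Definition toZ (r : nat) (D : 'I_r -> nat) : 'I_r -> int := fun i => (D i)%:Z.

(* g(E) = -E^2 + l(E), l linear given by its values l i = l(E_i) *)
Definition gfun (r : nat) (b : 'I_r -> nat) (adj : rel 'I_r) (l : 'I_r -> rat)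
    (x : 'I_r -> int) : rat :=
  - ((idot b adj x x)%:~R) + \sum_(i < r) (x i)%:~R * l i.

Definition supp (r : nat) (D : 'I_r -> nat) : {set 'I_r} := [set i | (0 < D i)%N].

Definition conn_set (r : nat) (adj : rel 'I_r) (S : {set 'I_r}) : Prop :=
  forall x y, x \in S -> y \in S ->
    connect [rel u v | [&& adj u v, u \in S & v \in S]] x y.

Definition is_component (r : nat) (adj : rel 'I_r) (S C : {set 'I_r}) : Prop :=
  [/\ C \subset S, C != set0, conn_set adj C &
      forall x y, x \in C -> y \in S -> adj x y -> y \in C].

Definition mval (r : nat) (b : 'I_r -> nat) (S : {set 'I_r}) : int :=
  2 + \sum_(j in S) ((b j)%:Z - 2).

(* Dual graph data of the minimal resolution of a log terminal surface
   singularity: smooth rational curves with b_i >= 2 (minimality), meeting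
   transversally in at most one point, forming a tree, negative definite
   intersection matrix, and all discrepancies a_i > -1, where
   K_{Z_0} = pi_0^* K_Z + sum a_j E_j is determined numerically by
   adjunction K.E_i = b_i - 2. *)
Definition lt_min_res (r : nat) (b : 'I_r -> nat) (adj : rel 'I_r) : Prop :=
  [/\ (0 < r)%N, (forall i, 2 <= b i)%N, symmetric adj & irreflexive adj] /\
  ((forall i j, connect adj i j) /\
   #|[set p : 'I_r * 'I_r | (val p.1 < val p.2)%N && adj p.1 p.2]| = r.-1) /\
  (forall x : 'I_r -> int, (exists i, x i != 0) -> idot b adj x x < 0) /\
  (exists a : 'I_r -> rat,
     (forall i, \sum_(j < r) a j * (inter b adj j i)%:~R = (b i)%:R - 2) /\
     (forall i, -1 < a i)).

Definition numcand (r : nat) (b : 'I_r -> nat) (adj : rel 'I_r)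
    (S : {set 'I_r}) (F : 'I_r -> nat) : Prop :=
  [/\ exists i, F i != 0%N, supp F \subset S &
      forall i, i \in S -> idot b adj (toZ F) (ecurve i) <= 0].

Definition is_numcycle (r : nat) (b : 'I_r -> nat) (adj : rel 'I_r)
    (S : {set 'I_r}) (F : 'I_r -> nat) : Prop :=
  numcand b adj S F /\
  forall F', numcand b adj S F' -> (forall i, F' i <= F i)%N ->
    forall i, F' i = F i.

Definition decomp (r : nat) (b : 'I_r -> nat) (D Dnum D1 D2 : 'I_r -> nat) : Prop :=
  (mval b (supp D) = 2 /\ (forall i, D1 i = D i) /\ (forall i, D2 i = 0%N)) \/
  (mval b (supp D) > 2 /\
   exists n : nat,
     [/\ (exists i, [&& i \in supp D, (2 < b i)%N & D i == n]),
         (forall i, i \in supp D -> (2 < b i)%N -> (n <= D i)%N),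
         (forall i, D1 i = minn (n * Dnum i) (D i)) &
         (forall i, D2 i = (D i - D1 i)%N)]).

(* Main.v *)
Require Import Defs.
From mathcomp Require Import all_boot all_order all_algebra.
From mathcomp Require Import ring lra zify.
Import Order.TTheory GRing.Theory Num.Theory.
Local Open Scope ring_scope.
Set Implicit Arguments. Unset Strict Implicit. Unset Printing Implicit Defensive.







Section Alg.
Variables (r : nat) (b : 'I_r -> nat) (adj : rel 'I_r).
Hypothesis adj_sym : symmetric adj.
Hypothesis adj_irr : irreflexive adj.

Definition dE (x : 'I_r -> int) (j : 'I_r) : int := \sum_(i < r) x i * inter b adj i j.
Definition kd (x : 'I_r -> int) : int := \sum_(i < r) x i * ((b i)%:Z - 2).
Definition Pf (x : 'I_r -> int) : int := - idot b adj x x - kd x.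

Lemma inter_sym i j : inter b adj i j = inter b adj j i.
Proof. rewrite /inter eq_sym; case: eqP => [->//|_]; by rewrite adj_sym. Qed.

Lemma inter_diag i : inter b adj i i = - (b i)%:Z.
Proof. by rewrite /inter eqxx. Qed.

Lemma inter_off i j : i != j -> 0 <= inter b adj i j.
Proof. by rewrite /inter => /negbTE ->; case: (adj i j). Qed.

Lemma inter_adj i j : adj i j -> inter b adj i j = 1.
Proof.
move=> h; have ne : i != j by apply/negP => /eqP e; rewrite e adj_irr in h.
by rewrite /inter (negbTE ne) h.
Qed.

Lemma idotE x y : idot b adj x y = \sum_(j < r) y j * dE x j.
Proof.
rewrite /idot exchange_big; apply eq_bigr => j _; rewrite /dE mulr_sumr.
by apply eq_bigr => i _; ring.
Qed.

Lemma idot_sym x y : idot b adj x y = idot b adj y x.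
Proof.
rewrite /idot exchange_big; apply eq_bigr => j _; apply eq_bigr => i _.
by rewrite inter_sym; ring.
Qed.

Lemma idotE' x y : idot b adj x y = \sum_(j < r) x j * dE y j.
Proof. by rewrite idot_sym idotE. Qed.

Lemma idot_ext x x' y y' : (forall i, x i = x' i) -> (forall i, y i = y' i) ->
  idot b adj x y = idot b adj x' y'.
Proof.
move=> hx hy; rewrite /idot; apply eq_bigr => i _; apply eq_bigr => j _.
by rewrite hx hy.
Qed.

Lemma dE_ext x x' j : (forall i, x i = x' i) -> dE x j = dE x' j.
Proof. by move=> h; apply eq_bigr => i _; rewrite h. Qed.

Lemma kd_ext x x' : (forall i, x i = x' i) -> kd x = kd x'.
Proof. by move=> h; apply eq_bigr => i _; rewrite h. Qed.

Lemma idotDl x y z : idot b adj (fun i => x i + y i) z = idot b adj x z + idot b adj y z.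
Proof.
rewrite /idot -big_split; apply eq_bigr => i _; rewrite -big_split.
by apply eq_bigr => j _ /=; ring.
Qed.

Lemma idotDr x y z : idot b adj z (fun i => x i + y i) = idot b adj z x + idot b adj z y.
Proof. by rewrite idot_sym idotDl !(idot_sym z). Qed.

Lemma dED x y j : dE (fun i => x i + y i) j = dE x j + dE y j.
Proof. rewrite /dE -big_split; apply eq_bigr => i _ /=; ring. Qed.

Lemma kdD x y : kd (fun i => x i + y i) = kd x + kd y.
Proof. rewrite /kd -big_split; apply eq_bigr => i _ /=; ring. Qed.

Lemma PfD x y : Pf (fun i => x i + y i) = Pf x + Pf y - 2 * idot b adj x y.
Proof.
rewrite /Pf kdD idotDl !idotDr (idot_sym y x); ring.
Qed.

Lemma dE_ecurve x j : idot b adj x (ecurve j) = dE x j.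
Proof.
rewrite idotE (bigD1 j) //= big1 ?addr0 /ecurve ?eqxx ?mul1r //.
by move=> i /negbTE ->; rewrite mul0r.
Qed.

Lemma dE_ecurve' x j : idot b adj (ecurve j) x = dE x j.
Proof. by rewrite idot_sym dE_ecurve. Qed.

Lemma dE_ec i j : dE (ecurve i) j = inter b adj i j.
Proof.
rewrite /dE (bigD1 i) //= big1 ?addr0 /ecurve ?eqxx ?mul1r //.
by move=> k /negbTE ->; rewrite mul0r.
Qed.

Lemma kd_ec i : kd (ecurve i) = (b i)%:Z - 2.
Proof.
rewrite /kd (bigD1 i) //= big1 ?addr0 /ecurve ?eqxx ?mul1r //.
by move=> k /negbTE ->; rewrite mul0r.
Qed.

Lemma Pf_ec i : Pf (ecurve i) = 2.
Proof. by rewrite /Pf dE_ecurve dE_ec inter_diag kd_ec; ring. Qed.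

Lemma Pf_addE x j : Pf (fun i => x i + ecurve j i) = Pf x + 2 - 2 * dE x j.
Proof. by rewrite PfD Pf_ec dE_ecurve; ring. Qed.

Lemma dE_mono x y j : (forall i, x i <= y i) -> x j = y j -> dE x j <= dE y j.
Proof.
move=> hle heq; rewrite /dE; apply ler_sum => i _.
have [->|ne] := eqVneq i j; first by rewrite heq.
by apply ler_wpM2r; [apply inter_off|apply hle].
Qed.

End Alg.

Section Neg.
Variables (r : nat) (b : 'I_r -> nat) (adj : rel 'I_r).
Hypothesis adj_sym : symmetric adj.
Hypothesis adj_irr : irreflexive adj.
Hypothesis negdef : forall x : 'I_r -> int, (exists i, x i != 0) -> idot b adj x x < 0.

Lemma NEG (V : 'I_r -> int) : (forall j, 0 < V j -> 0 <= dE b adj V j) -> forall j, V j <= 0.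
Proof.
move=> hV j; rewrite leNgt; apply/negP => Vj.
pose P i := if 0 < V i then V i else 0.
have hP : exists i, P i != 0 by exists j; rewrite /P Vj gt_eqF.
have := negdef hP; rewrite idotE ltNge => /negP; apply.
apply sumr_ge0 => i _; rewrite /P; case: ifP => Vi; last by rewrite mul0r.
apply mulr_ge0; first by apply ltW.
apply: (le_trans (hV i Vi)); apply dE_mono.
  by move=> k /=; case: ifP => // /negbT; rewrite -leNgt.
by rewrite Vi.
Qed.

End Neg.

Section Denom.
Variables (r : nat) (b : 'I_r -> nat) (adj : rel 'I_r).
Hypothesis adj_sym : symmetric adj.
Hypothesis adj_irr : irreflexive adj.
Hypothesis negdef : forall x : 'I_r -> int, (exists i, x i != 0) -> idot b adj x x < 0.
Variable a : 'I_r -> rat.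
Hypothesis ha : forall i, \sum_(j < r) a j * (inter b adj j i)%:~R = (b i)%:R - 2.
Hypothesis ha1 : forall i, -1 < a i.
Hypothesis b_ge2 : forall i, (2 <= b i)%N.

Lemma denom_ex : exists d : int, 0 < d /\ exists al : 'I_r -> int,
  forall i, (al i)%:~R = d%:~R * a i.
Proof.
exists (\prod_(i < r) denq (a i)); split.
  by apply prodr_gt0 => i _; apply denq_gt0.
exists (fun i => numq (a i) * \prod_(k < r | k != i) denq (a k)) => i.
rewrite [in RHS](bigD1 i) //= !intrM numqE; ring.
Qed.

Variables (d : int) (al : 'I_r -> int).
Hypothesis d_gt0 : 0 < d.
Hypothesis hal : forall i, (al i)%:~R = d%:~R * a i.

Lemma al_gt i : - d < al i.
Proof.
rewrite -(ltr_int rat) hal rmorphN /=.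
have : (0 : rat) < d%:~R by rewrite ltr0z.
have := ha1 i; nra.
Qed.

Lemma dE_al i : dE b adj al i = d * ((b i)%:Z - 2).
Proof.
apply/eqP; rewrite -(eqr_int rat) /dE rmorph_sum /=.
under eq_bigr => j _ do rewrite intrM hal -mulrA.
rewrite -mulr_sumr ha intrM rmorphB /=; apply/eqP; congr (_ * (_ - _)).
Qed.

Lemma al_le0 i : al i <= 0.
Proof.
apply: (NEG negdef) => j _; rewrite dE_al.
apply mulr_ge0; first by apply ltW.
rewrite subr_ge0; have := b_ge2 j; lia.
Qed.

End Denom.

Section Rat.
Variables (r : nat) (b : 'I_r -> nat) (adj : rel 'I_r).
Hypothesis adj_sym : symmetric adj.
Hypothesis adj_irr : irreflexive adj.
Hypothesis negdef : forall x : 'I_r -> int, (exists i, x i != 0) -> idot b adj x x < 0.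
Hypothesis b_ge2 : forall i, (2 <= b i)%N.
Variables (d : int) (al : 'I_r -> int).
Hypothesis d_gt0 : 0 < d.
Hypothesis al_gt : forall i, - d < al i.
Hypothesis dE_al : forall i, dE b adj al i = d * ((b i)%:Z - 2).
Hypothesis al_le0 : forall i, al i <= 0.

Lemma dEZ c x j : dE b adj (fun i => c * x i) j = c * dE b adj x j.
Proof. rewrite /dE mulr_sumr; apply eq_bigr => i _; ring. Qed.

Lemma Pf_ext x x' : (forall i, x i = x' i) -> Pf b adj x = Pf b adj x'.
Proof. by move=> h; rewrite /Pf (idot_ext b adj h h) (kd_ext b h). Qed.

Lemma Pf0 : Pf b adj (fun _ => 0) = 0.
Proof.
have h1 : idot b adj (fun _ => 0) (fun _ => 0) = 0.
  by rewrite /idot big1 // => i _; rewrite big1 // => j _; rewrite !mul0r.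
have h2 : kd b (fun _ => 0) = 0 by rewrite /kd big1 // => i _; rewrite mul0r.
by rewrite /Pf h1 h2 oppr0 subr0.
Qed.

Lemma wlem (Y : 'I_r -> int) : (forall i, 0 <= Y i) -> (exists i, Y i != 0) ->
  exists j, 0 < Y j /\ dE b adj Y j + ((b j)%:Z - 2) < 0.
Proof.
move=> Y0 [i Yi].
case: (pickP [pred j | (0 < Y j) && (dE b adj Y j + ((b j)%:Z - 2) < 0)]) => [j /andP[h1 h2]|H].
  by exists j.
pose V k := d * Y k + al k.
have hV : forall j, 0 < V j -> 0 <= dE b adj V j.
  move=> j Vj; rewrite /V dED dEZ dE_al.
  have Yj : 0 < Y j.
    rewrite lt_neqAle Y0 andbT eq_sym; apply/negP => /eqP Y0j.
    by move: Vj; rewrite /V Y0j mulr0 add0r ltNge al_le0.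
  have := H j; rewrite /= Yj /= => /negbT; rewrite -leNgt => h.
  rewrite -mulrDr; apply mulr_ge0 => //; exact: ltW.
have := NEG negdef hV i; rewrite /V.
have : 0 < Y i by rewrite lt_neqAle Y0 andbT eq_sym Yi.
have := al_gt i; have := d_gt0; nia.
Qed.

Lemma sum_nonneg_zero (Y : 'I_r -> int) : (forall i, 0 <= Y i) ->
  \sum_(i < r) Y i <= 0 -> forall i, Y i = 0.
Proof.
move=> Y0 hs i; apply/eqP; rewrite eq_le Y0 andbT.
apply: le_trans hs; rewrite (bigD1 i) //= lerDl; by apply sumr_ge0.
Qed.

Lemma Rat_aux (n : nat) (Y : 'I_r -> int) : (forall i, 0 <= Y i) ->
  (exists i, Y i != 0) -> \sum_(i < r) Y i <= n%:Z -> 2 <= Pf b adj Y.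
Proof.
elim: n Y => [|n IH] Y Y0 [i Yi] hs.
  by move: Yi; rewrite (sum_nonneg_zero Y0 hs) eqxx.
have [j [Yj hj]] := wlem Y0 (ex_intro _ i Yi).
pose Y' k := Y k - ecurve j k.
have eY : forall k, Y k = Y' k + ecurve j k by move=> k; rewrite /Y'; ring.
have dY' : dE b adj Y' j = dE b adj Y j + (b j)%:Z.
  have eq1 : forall k, Y' k = Y k + (-1) * ecurve j k by move=> k; rewrite /Y'; ring.
  rewrite (dE_ext b adj j eq1).
  by rewrite dED dEZ dE_ec inter_diag; ring.
have Y'0 : forall k, 0 <= Y' k.
  move=> k; rewrite /Y' /ecurve; case: eqP => [->|_] /=; last by rewrite subr0.
  by rewrite subr_ge0.
rewrite (Pf_ext eY) (Pf_addE b adj_sym) dY'.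
case: (pickP [pred k | Y' k != 0]) => [k /= Yk|H0].
  have h2 := IH Y' Y'0 (ex_intro _ k Yk).
  have : \sum_(k < r) Y' k <= n%:Z.
    rewrite /Y' sumrB; move: hs.
    have -> : \sum_(k < r) ecurve j k = 1.
      rewrite (bigD1 j) //= big1 ?addr0 /ecurve ?eqxx //.
      by move=> k' /negbTE ->.
    rewrite -[n.+1]addn1 PoszD; lra.
  move/h2; lia.
rewrite (Pf_ext (fun k => (eqP (negbFE (H0 k))))) Pf0.
have : dE b adj Y' j = 0.
  by rewrite (dE_ext b adj j (fun k => (eqP (negbFE (H0 k))))) /dE big1 // => k _; rewrite mul0r.
lia.
Qed.

Lemma Rat (Y : 'I_r -> int) : (forall i, 0 <= Y i) ->
  (exists i, Y i != 0) -> 2 <= Pf b adj Y.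
Proof.
move=> Y0 hY; apply: (Rat_aux (n := absz (\sum_(i < r) Y i))) => //.
by rewrite abszE ler_norm.
Qed.

End Rat.

Lemma sum_ec r (j : 'I_r) : \sum_(i < r) ecurve j i = 1.
Proof.
rewrite (bigD1 j) //= big1 ?addr0 /ecurve ?eqxx //.
by move=> k' /negbTE ->.
Qed.

Section Lauf.
Variables (r : nat) (b : 'I_r -> nat) (adj : rel 'I_r).
Hypothesis adj_sym : symmetric adj.

Lemma Lauf_aux (B : 'I_r -> int) (n : nat) (A : 'I_r -> int) :
  \sum_(i < r) (B i - A i) <= n%:Z -> (forall i, A i <= B i) ->
  (forall A' : 'I_r -> int, (forall i, A i <= A' i) -> (forall i, A' i <= B i) ->
     (exists i, A' i != B i) -> exists j, A' j < B j /\ 1 <= dE b adj A' j) ->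
  Pf b adj B <= Pf b adj A.
Proof.
elim: n A => [|n IH] A hs hAB hstep.
  have h0 : forall i, 0 <= B i - A i by move=> i; rewrite subr_ge0.
  have e := sum_nonneg_zero h0 hs.
  have -> : Pf b adj B = Pf b adj A by apply Pf_ext => i; have := e i; lia.
  by [].
case: (pickP [pred i | A i != B i]) => [i /= Ai|H0]; last first.
  have -> : Pf b adj B = Pf b adj A.
    by apply Pf_ext => i; have := H0 i; rewrite /= => /negbFE /eqP.
  by [].
have [j [Aj hj]] := hstep A (fun i => lexx _) hAB (ex_intro _ i Ai).
pose A2 k := A k + ecurve j k.
have hA2 : forall k, A2 k <= B k.
  move=> k; rewrite /A2 /ecurve; case: eqP => [->|_] /=; first by lia.
  by rewrite addr0.
have hAA2 : forall k, A k <= A2 k.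
  by move=> k; rewrite /A2 /ecurve lerDl; case: (k == j).
apply: (@le_trans _ _ (Pf b adj A2)).
  apply: IH => //.
    move: hs; rewrite /A2.
    have -> : \sum_(i < r) (B i - (A i + ecurve j i)) = \sum_(i < r) (B i - A i) - 1.
      rewrite -(sum_ec j) -sumrB; apply eq_bigr => k _; ring.
    rewrite -[n.+1]addn1 PoszD; lra.
  move=> A' h1 h2 h3; apply: hstep => // k; exact: le_trans (hAA2 k) (h1 k).
rewrite /A2 (Pf_addE b adj_sym); lia.
Qed.
End Lauf.

Lemma Lauf r (b : 'I_r -> nat) (adj : rel 'I_r) (adj_sym : symmetric adj)
  (B A : 'I_r -> int) : (forall i, A i <= B i) ->
  (forall A' : 'I_r -> int, (forall i, A i <= A' i) -> (forall i, A' i <= B i) ->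
     (exists i, A' i != B i) -> exists j, A' j < B j /\ 1 <= dE b adj A' j) ->
  Pf b adj B <= Pf b adj A.
Proof.
move=> h1 h2; apply: (Lauf_aux adj_sym (n := absz (\sum_(i < r) (B i - A i)))) => //.
by rewrite abszE ler_norm.
Qed.

Lemma growth r (adj : rel 'I_r) (S : {set 'I_r}) (P : pred 'I_r) x y :
  conn_set adj S -> x \in S -> y \in S -> P x -> ~~ P y ->
  exists u v, [/\ adj u v, u \in S, v \in S, P u & ~~ P v].
Proof.
move=> hc xS yS Px Py.
case: (pickP [pred p : 'I_r * 'I_r | [&& adj p.1 p.2, p.1 \in S, p.2 \in S, P p.1 & ~~ P p.2]]) => [[u v] /and5P[]|H].
  by move=> *; exists u, v.
have cl : forall u v, [&& adj u v, u \in S & v \in S] -> P u -> P v.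
  move=> u v /and3P[a1 a2 a3] Pu; apply/negPn/negP => Pv.
  by have := H (u, v); rewrite /= a1 a2 a3 Pu Pv.
have Py' : P y.
  have := hc x y xS yS; move/connectP => [p hp ey]; rewrite ey {ey}.
  elim: p x hp Px {xS} => [//|z p IHp] x /= /andP[exz hp] Px.
  apply: IHp hp _; exact: cl exz Px.
by rewrite Py' in Py.
Qed.

Lemma dE_pos r (b : 'I_r -> nat) (adj : rel 'I_r) (adj_irr : irreflexive adj)
  (A : 'I_r -> int) u v : (forall i, 0 <= A i) -> A v = 0 -> 1 <= A u -> adj u v ->
  1 <= dE b adj A v.
Proof.
move=> A0 Av Au huv.
have ne : u != v by apply/negP => /eqP e; rewrite e adj_irr in huv.
rewrite /dE (bigD1 u) //= (inter_adj b adj_irr huv) mulr1.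
have : 0 <= \sum_(i < r | i != u) A i * inter b adj i v.
  apply sumr_ge0 => i _; have [->|niv] := eqVneq i v; first by rewrite Av mul0r.
  by apply mulr_ge0; [apply A0|apply inter_off].
lra.
Qed.

Section Struct.
Variables (r : nat) (b : 'I_r -> nat) (adj : rel 'I_r).
Hypothesis adj_sym : symmetric adj.
Hypothesis adj_irr : irreflexive adj.
Hypothesis negdef : forall x : 'I_r -> int, (exists i, x i != 0) -> idot b adj x x < 0.
Hypothesis b_ge2 : forall i, (2 <= b i)%N.
Variables (S : {set 'I_r}) (Z : 'I_r -> nat).
Hypothesis hS : conn_set adj S.
Hypothesis hZ : is_numcycle b adj S Z.

Lemma Zout i : i \notin S -> Z i = 0%N.
Proof.
move=> iS; case: hZ => [[_ sub _] _]; apply/eqP; move: iS; apply: contraNT => Zi.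
by apply: (subsetP sub); rewrite inE lt0n.
Qed.

Lemma Zcand i : i \in S -> dE b adj (toZ Z) i <= 0.
Proof. by case: hZ => [[_ _ h] _] /h; rewrite dE_ecurve. Qed.

Lemma Zex : exists x, x \in S /\ (0 < Z x)%N.
Proof.
case: hZ => [[[x Zx] _ _] _]; exists x; split; last by rewrite lt0n.
by apply/negPn/negP => /Zout; apply/eqP.
Qed.

Lemma Zfull i : i \in S -> (0 < Z i)%N.
Proof.
move=> iS; apply/negPn/negP => Zi.
have [x [xS Zx]] := Zex.
have [u [v [huv uS vS Pu Pv]]] := growth (P := fun k => (0 < Z k)%N) hS xS iS Zx Zi.
have := Zcand vS; rewrite leNgt => /negP; apply.
apply: (@lt_le_trans _ _ 1) => //.
apply: (@dE_pos _ b adj adj_irr (toZ Z) u v) => //.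
by move: Pv; rewrite /toZ lt0n negbK => /eqP ->.
Qed.

Lemma PfZ : Pf b adj (toZ Z) <= 2.
Proof.
have [x [xS Zx]] := Zex.
apply: (@le_trans _ _ (Pf b adj (ecurve x))); last by rewrite Pf_ec.
apply: (@Lauf r b adj adj_sym).
  move=> i; rewrite /ecurve /toZ; case: eqP => [->|_] /=; lia.
move=> A' h1 h2 [i Ai].
have A'0 : forall k, 0 <= A' k.
  by move=> k; apply: le_trans (h1 k); rewrite /ecurve; case: (k == x).
case: (pickP [pred j | (j \in S) && (0 < dE b adj A' j)]) => [j /andP[jS hj]|H].
  exists j; split; last by lia.
  rewrite lt_neqAle h2 andbT; apply/negP => /eqP e.
  have := dE_mono b adj h2 e; have := Zcand jS; lia.
exfalso.
pose F' k := absz (A' k).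
have eF : forall k, toZ F' k = A' k by move=> k; rewrite /toZ /F' gez0_abs.
have cand : numcand b adj S F'.
  split.
  - exists x; rewrite /F'; have := h1 x; rewrite /ecurve eqxx; lia.
  - apply/subsetP => k; rewrite inE => Fk; apply/negPn/negP => kS.
    have := h2 k; rewrite /toZ (Zout kS); move: Fk; rewrite /F'; have := A'0 k; lia.
  - move=> k kS; rewrite dE_ecurve (dE_ext b adj k eF).
    by have := H k; rewrite /= kS /= leNgt => ->.
have le : forall k, (F' k <= Z k)%N.
  by move=> k; have := h2 k; rewrite /F' /toZ; have := A'0 k; lia.
case: hZ => [_ hmin]; have := hmin F' cand le i.
by move: Ai; rewrite /F' /toZ; have := A'0 i; lia.
Qed.

Definition ES k : int := if k \in S then 1 else 0.

Lemma PfES : Pf b adj ES <= 2.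
Proof.
have [x [xS Zx]] := Zex.
apply: (@le_trans _ _ (Pf b adj (ecurve x))); last by rewrite Pf_ec.
apply: (@Lauf r b adj adj_sym).
  move=> i; rewrite /ecurve /ES; case: eqP => [->|_] /=; first by rewrite xS.
  by case: (i \in S).
move=> A' h1 h2 [i Ai].
have A'0 : forall k, 0 <= A' k.
  by move=> k; apply: le_trans (h1 k); rewrite /ecurve; case: (k == x).
have iS : i \in S.
  apply/negPn/negP => iS; move: Ai (h2 i) (A'0 i); rewrite /ES (negbTE iS); lia.
have A'i : ~~ (0 < A' i).
  move: Ai (h2 i) (A'0 i); rewrite /ES iS; lia.
have A'x : 0 < A' x by have := h1 x; rewrite /ecurve eqxx; lia.
have [u [v [huv uS vS Pu Pv]]] := growth (P := fun k => 0 < A' k) hS xS iS A'x A'i.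
exists v; split.
  by rewrite /ES vS; move: Pv (A'0 v); lia.
apply: (@dE_pos _ b adj adj_irr A' u v) => //.
by move: Pv (A'0 v); lia.
Qed.

End Struct.

Section F1.
Variables (r : nat) (b : 'I_r -> nat) (adj : rel 'I_r).
Hypothesis adj_sym : symmetric adj.
Hypothesis adj_irr : irreflexive adj.
Hypothesis negdef : forall x : 'I_r -> int, (exists i, x i != 0) -> idot b adj x x < 0.
Hypothesis b_ge2 : forall i, (2 <= b i)%N.
Variables (d : int) (al : 'I_r -> int).
Hypothesis d_gt0 : 0 < d.
Hypothesis al_gt : forall i, - d < al i.
Hypothesis dE_al : forall i, dE b adj al i = d * ((b i)%:Z - 2).
Hypothesis al_le0 : forall i, al i <= 0.
Variables (S : {set 'I_r}) (Z : 'I_r -> nat).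
Hypothesis hS : conn_set adj S.
Hypothesis hZ : is_numcycle b adj S Z.

Let RatL := Rat adj_sym negdef d_gt0 al_gt dE_al al_le0.

Definition alS k : int := if k \in S then al k else 0.
Definition U k : int := d * ES S k + alS k.

Lemma dE_alS j : j \in S -> d * ((b j)%:Z - 2) <= dE b adj alS j.
Proof.
move=> jS; rewrite -dE_al; apply dE_mono.
  by move=> k; rewrite /alS; case: (k \in S) => //.
by rewrite /alS jS.
Qed.

Lemma idotU_lb (Y : 'I_r -> int) : (forall k, 0 <= Y k) -> (forall k, k \notin S -> Y k = 0) ->
  d * (idot b adj Y (ES S) + kd b Y) <= idot b adj Y U.
Proof.
move=> Y0 Yout.
rewrite !(idotE' b adj_sym) /kd mulrDr !mulr_sumr -big_split /=; apply ler_sum => j _.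
rewrite /U dED dEZ.
case jS: (j \in S); last by rewrite Yout ?jS // !mul0r mulr0 addr0.
have := dE_alS jS; have := Y0 j; nia.
Qed.

Lemma idotZU : idot b adj (toZ Z) U < 0.
Proof.
rewrite idotE.
have hterm : forall k, U k * dE b adj (toZ Z) k <= 0.
  move=> k; rewrite /U /alS /ES; case kS: (k \in S); last by rewrite mulr0 addr0 mul0r.
  have := Zcand hZ kS; have := al_gt k; nia.
have [x [xS Zx]] := Zex hZ.
have Zne : exists i, toZ Z i != 0 by exists x; rewrite /toZ; lia.
have := negdef Zne; rewrite idotE.
case: (pickP [pred k | (k \in S) && (dE b adj (toZ Z) k < 0)]) => [k /andP[kS hk]|H].
  move=> _; rewrite (bigD1 k) //=.
  have : \sum_(i < r | i != k) U i * dE b adj (toZ Z) i <= 0 by apply sumr_le0 => i _.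
  have : U k * dE b adj (toZ Z) k < 0.
    rewrite /U /alS /ES kS; have := al_gt k; nia.
  lra.
rewrite ltNge => /negP []; apply sumr_ge0 => k _.
case kS: (k \in S); last by rewrite /toZ (Zout hZ (negbT kS)) mul0r.
have := H k; rewrite /= kS /= => /negbT; rewrite -leNgt => h1.
have e : dE b adj (toZ Z) k = 0 by apply/eqP; rewrite eq_le h1 (Zcand hZ kS).
by rewrite e mulr0.
Qed.

Lemma F1 i : i \in S -> (2 < b i)%N -> Z i = 1%N.
Proof.
move=> iS bi.
pose N k := toZ Z k - ES S k.
have N0 : forall k, 0 <= N k.
  move=> k; rewrite /N /ES /toZ; case kS: (k \in S); last by rewrite subr0.
  have := Zfull adj_irr hS hZ kS; lia.
have Nout : forall k, k \notin S -> N k = 0.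
  by move=> k kS; rewrite /N /ES (negbTE kS) /toZ (Zout hZ kS) subr0.
have eZ : forall k, toZ Z k = ES S k + N k by move=> k; rewrite /N; ring.
have [x [xS Zx]] := Zex hZ.
have ES0 : forall k, 0 <= ES S k by move=> k; rewrite /ES; case: (k \in S).
have RES : 2 <= Pf b adj (ES S) by apply: RatL => //; exists x; rewrite /ES xS.
have PES := PfES adj_sym adj_irr hS hZ.
have PZ := PfZ adj_sym hZ.
case: (pickP [pred k | N k != 0]) => [k /= Nk|H0]; last first.
  have := H0 i; rewrite /= /N /ES iS /toZ => /negbFE /eqP; lia.
have RN : 2 <= Pf b adj N by apply: RatL => //; exists k.
have PZe : Pf b adj (toZ Z) = Pf b adj (ES S) + Pf b adj N - 2 * idot b adj (ES S) N.
  by rewrite (Pf_ext b adj eZ) (PfD b adj_sym).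
have h1 : 1 <= idot b adj (ES S) N by lia.
have hZU := idotZU.
have eZU : idot b adj (toZ Z) U = idot b adj (ES S) U + idot b adj N U.
  by rewrite (idot_ext b adj eZ (fun k => erefl)) idotDl.
have lbN := idotU_lb N0 Nout.
have lbE := idotU_lb ES0 (fun k kS => ifN _ _ kS).
have eES : Pf b adj (ES S) = - idot b adj (ES S) (ES S) - kd b (ES S) by [].
have key : idot b adj N (ES S) + kd b N < Pf b adj (ES S).
  rewrite (idot_sym b adj_sym) in lbN.
  have : d * (idot b adj (ES S) N + kd b N - Pf b adj (ES S)) < 0.
    rewrite eES; move: hZU; rewrite eZU; lra.
  rewrite pmulr_rlt0 // (idot_sym b adj_sym); lra.
rewrite (idot_sym b adj_sym) in key.
have kN : kd b N <= 0 by lia.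
have kN0 : forall k, N k * ((b k)%:Z - 2) = 0.
  apply: sum_nonneg_zero => // k'; apply mulr_ge0 => //; have := b_ge2 k'; lia.
have := kN0 i; rewrite /N /ES iS /toZ; nia.
Qed.

End F1.

Section Gfun.
Variables (r : nat) (b : 'I_r -> nat) (adj : rel 'I_r) (l : 'I_r -> rat).
Hypothesis adj_sym : symmetric adj.

Lemma gfun_ext x x' : (forall i, x i = x' i) -> gfun b adj l x = gfun b adj l x'.
Proof.
move=> h; rewrite /gfun (idot_ext b adj h h); congr (_ + _).
by apply eq_bigr => i _; rewrite h.
Qed.

Lemma gfunD x y : gfun b adj l (fun i => x i + y i) =
  gfun b adj l x + gfun b adj l y - 2 * (idot b adj x y)%:~R.
Proof.
rewrite /gfun idotDl !(idotDr b adj_sym) (idot_sym b adj_sym y x).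
have -> : \sum_(i < r) (x i + y i)%:~R * l i =
   \sum_(i < r) (x i)%:~R * l i + \sum_(i < r) (y i)%:~R * l i.
  by rewrite -big_split; apply eq_bigr => i _; rewrite rmorphD mulrDl.
rewrite !rmorphD /=; ring.
Qed.

Lemma gfun0 : gfun b adj l (fun _ => 0) = 0.
Proof.
rewrite /gfun /idot big1 ?big1 ?oppr0 ?add0r //.
- by move=> i _; rewrite mul0r.
- by move=> i _; rewrite big1 // => j _; rewrite !mul0r.
Qed.

End Gfun.

Section Main.
Variables (r : nat) (b : 'I_r -> nat) (adj : rel 'I_r) (l : 'I_r -> rat).
Hypothesis adj_sym : symmetric adj.
Hypothesis adj_irr : irreflexive adj.
Hypothesis negdef : forall x : 'I_r -> int, (exists i, x i != 0) -> idot b adj x x < 0.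
Hypothesis b_ge2 : forall i, (2 <= b i)%N.
Variables (d : int) (al : 'I_r -> int).
Hypothesis d_gt0 : 0 < d.
Hypothesis al_gt : forall i, - d < al i.
Hypothesis dE_al : forall i, dE b adj al i = d * ((b i)%:Z - 2).
Hypothesis al_le0 : forall i, al i <= 0.
Hypothesis hl : forall i, l i <= 0.
Variables (D Z : 'I_r -> nat).
Hypothesis hS : conn_set adj (supp D).
Hypothesis hZ : is_numcycle b adj (supp D) Z.

Let RatL := Rat adj_sym negdef d_gt0 al_gt dE_al al_le0.

Lemma GY (Y : 'I_r -> int) : (forall i, 0 <= Y i) -> (forall i, Y i <= toZ Z i) ->
  (exists i, Y i != 0) -> (forall j, (2 < b j)%N -> Y j = toZ Z j) ->
  gfun b adj l (toZ Z) <= gfun b adj l Y.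
Proof.
move=> Y0 YZ Ynz Yb.
have RY := RatL Y0 Ynz.
have PZ := PfZ adj_sym hZ.
have ek : kd b Y = kd b (toZ Z).
  apply eq_bigr => j _; case: (ltnP 2 (b j)) => hb; first by rewrite Yb.
  have -> : (b j)%:Z - 2 = 0 by have := b_ge2 j; lia.
  by rewrite !mulr0.
have hq : - idot b adj (toZ Z) (toZ Z) <= - idot b adj Y Y.
  by move: RY PZ; rewrite /Pf ek; lia.
rewrite /gfun; apply lerD.
  by rewrite -!rmorphN /= ler_int.
apply ler_sum => i _.
have : (Y i)%:~R <= (toZ Z i)%:~R :> rat by rewrite ler_int.
have := hl i; nra.
Qed.

Lemma CROSS (A B : 'I_r -> int) (t : int) : 0 <= t ->
  (forall i, A i <= t * toZ Z i) -> (forall i, 0 <= B i) ->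
  (forall i, 0 < B i -> i \in supp D /\ A i = t * toZ Z i) ->
  idot b adj A B <= 0.
Proof.
move=> t0 hA B0 hB; rewrite idotE; apply sumr_le0 => i _.
case: (ltP 0 (B i)) => Bi; last first.
  have -> : B i = 0 by apply/eqP; rewrite eq_le Bi B0.
  by rewrite mul0r.
have [iS eA] := hB i Bi.
have h1 : dE b adj A i <= dE b adj (fun k => t * toZ Z k) i by apply dE_mono.
rewrite dEZ in h1.
have := Zcand hZ iS; nia.
Qed.

Definition Xk (k : nat) i := minn (k * Z i) (D i).

Lemma Dpos i : i \in supp D -> (0 < D i)%N.
Proof. by rewrite inE. Qed.

Lemma Dout i : i \notin supp D -> D i = 0%N.
Proof. by rewrite inE lt0n negbK => /eqP. Qed.

Lemma levels (N : nat) : (1 <= N)%N ->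
  (forall k j, (1 <= k <= N)%N -> (2 < b j)%N -> (Xk k j - Xk k.-1 j)%N = Z j) ->
  0 < gfun b adj l (toZ Z) -> 0 < gfun b adj l (toZ (Xk N)).
Proof.
move=> N1 hlev gZ.
elim: N N1 hlev => [//|N IH] _ hlev.
have [x [xS Zx]] := Zex hZ.
case: N IH hlev => [|N] IH hlev.
  apply: (lt_le_trans gZ); apply: GY.
  - by move=> i.
  - by move=> i; rewrite /toZ /Xk mul1n; lia.
  - exists x; rewrite /toZ /Xk mul1n; have := Dpos xS; lia.
  - move=> j hb; have := hlev 1%N j isT hb; rewrite /toZ /Xk /= !mul0n !mul1n; lia.
have IH' : 0 < gfun b adj l (toZ (Xk N.+1)).
  apply IH => // k j hk hb; apply hlev => //; move: hk => /andP[h1 h2].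
  by rewrite h1 /=; exact: leqW.
set M := N.+1 in IH' hlev *.
pose Y i := (Xk M.+1 i - Xk M i)%N.
have eX : forall i, toZ (Xk M.+1) i = toZ (Xk M) i + toZ Y i.
  by move=> i; rewrite /toZ /Y /Xk; lia.
rewrite (gfun_ext b adj l eX) (gfunD b l adj_sym).
have hc : idot b adj (toZ (Xk M)) (toZ Y) <= 0.
  apply: (CROSS (t := M%:Z)) => //.
  - by move=> i; rewrite /toZ /Xk; lia.
  - move=> i; rewrite /toZ /Y /Xk => hi; split.
      by rewrite inE; lia.
    lia.
have gY : 0 <= gfun b adj l (toZ Y).
  case: (pickP [pred i | toZ Y i != 0]) => [i /= Yi|H0].
    apply: (le_trans (ltW gZ)); apply: GY.
    - by move=> k.
    - by move=> k; rewrite /toZ /Y /Xk; lia.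
    - by exists i.
    - by move=> j hb; rewrite /toZ /Y (hlev M.+1 j) //= ltnS leqnn.
  rewrite (gfun_ext b adj l (x' := fun _ => 0)) ?gfun0 // => i.
  by have := H0 i; rewrite /= => /negbFE /eqP.
have : (idot b adj (toZ (Xk M)) (toZ Y))%:~R <= 0 :> rat by rewrite lerz0.
lra.
Qed.

End Main.

Unset Implicit Arguments.

Theorem mainTheorem13 (r : nat) (b : 'I_r -> nat) (adj : rel 'I_r)
    (l : 'I_r -> rat) (D Dnum D1 D2 : 'I_r -> nat) :
  lt_min_res b adj ->
  (forall i, l i <= 0) ->
  supp D != set0 -> conn_set adj (supp D) ->
  is_numcycle b adj (supp D) Dnum ->
  decomp b D Dnum D1 D2 ->
  [/\ idot b adj (toZ D1) (toZ D2) <= 0,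
      0 < gfun b adj l (toZ Dnum) -> 0 < gfun b adj l (toZ D1) &
      forall C : {set 'I_r}, is_component adj (supp D2) C ->
        mval b C < mval b (supp D)].
Proof.
move=> [[_ b_ge2 adj_sym adj_irr] [_ [negdef [a [ha ha1]]]]] hl Dne hS hZ hdec.
have [d [d_gt0 [al hal]]] := denom_ex a.
have al_gt' := al_gt ha1 d_gt0 hal.
have dE_al' := dE_al ha hal.
have al_le0' := al_le0 negdef ha b_ge2 d_gt0 hal.
have Zf := Zfull adj_irr hS hZ.
have Zo := Zout hZ.
have F1' := F1 adj_sym adj_irr negdef b_ge2 d_gt0 al_gt' dE_al' al_le0' hS hZ.
have Dp : forall i, i \in supp D -> (0 < D i)%N by move=> i; rewrite inE.
have Do : forall i, i \notin supp D -> D i = 0%N by move=> i; rewrite inE lt0n negbK => /eqP.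
have lev := levels adj_sym negdef b_ge2 d_gt0 al_gt' dE_al' al_le0' hl hZ.
case: hdec => [[hm [e1 e2]]|[hm [n [[i0 /and3P[i0S bi0 /eqP Di0]] hmin e1 e2]]]].
-
  have bS : forall j, j \in supp D -> b j = 2%N.
    move=> j jS; move: hm; rewrite /mval => hm.
    have hs : \sum_(k in supp D) ((b k)%:Z - 2) == 0 by apply/eqP; lia.
    have h0 : forall k, k \in supp D -> 0 <= (b k)%:Z - 2 by move=> k _; have := b_ge2 k; lia.
    have := (psumr_eq0P h0 (eqP hs)) j jS; lia.
  split.
  + rewrite idotE big1 // => j _; by rewrite /toZ e2 mul0r.
  + move=> gZ.
    pose N := (\sum_(i < r) D i)%N.
    have DN : forall i, (D i <= N)%N.
      by move=> i; rewrite /N (bigD1 i) //=; apply: leq_addr.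
    have [x xS] := set0Pn _ Dne.
    have N1 : (1 <= N)%N by apply: leq_trans (Dp x xS) (DN x).
    have := lev N N1.
    have hlev : forall k j, (1 <= k <= N)%N -> (2 < b j)%N -> (Xk D Dnum k j - Xk D Dnum k.-1 j)%N = Dnum j.
      move=> k j _ hb.
      have jS : j \notin supp D by apply/negP => /bS; lia.
      by rewrite /Xk (Do j jS) (Zo j jS) !minn0.
    move/(_ hlev gZ).
    rewrite (gfun_ext b adj l (x := toZ (Xk D Dnum N)) (x' := toZ D1)) // => i.
    rewrite /toZ /Xk e1; case iS: (i \in supp D); last by rewrite (Do i (negbT iS)) minn0.
    have := Zf i iS; have := DN i; nia.
  + move=> C [Csub Cne _ _].
    have [c cC] := set0Pn _ Cne.
    by have := subsetP Csub c cC; rewrite inE e2.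
-
  have Zi0 := Zf i0 i0S.
  split.
  + apply: (CROSS d_gt0 hZ (t := n%:Z)) => //.
    * by move=> i; rewrite /toZ e1; lia.
    * move=> i; rewrite /toZ e2 e1 => h; split; last by lia.
      by rewrite inE; lia.
  + move=> gZ.
    have n1 : (1 <= n)%N by rewrite -Di0; apply: Dp.
    have := lev n n1.
    have hlev : forall k j, (1 <= k <= n)%N -> (2 < b j)%N -> (Xk D Dnum k j - Xk D Dnum k.-1 j)%N = Dnum j.
      move=> k j /andP[k1 kn] hb.
      case jS: (j \in supp D); last by rewrite /Xk (Do j (negbT jS)) (Zo j (negbT jS)) !minn0.
      have Z1 := F1' j jS hb; have := hmin j jS hb.
      rewrite /Xk Z1; lia.
    move/(_ hlev gZ).
    by rewrite (gfun_ext b adj l (x := toZ (Xk D Dnum n)) (x' := toZ D1)) // => i; rewrite /toZ /Xk e1.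
  + move=> C [Csub Cne _ _].
    have i0n : i0 \notin supp D2.
      rewrite inE e2 e1 Di0 -leqNgt; nia.
    have CS : C \subset [set j in supp D | j != i0].
      apply/subsetP => c cC; have := subsetP Csub c cC; rewrite !inE e2 => h.
      apply/andP; split; first by lia.
      apply/negP => /eqP ec; move: i0n; rewrite -ec inE e2 => /negP; apply; exact h.
    rewrite /mval ltrD2l [X in _ < X](bigD1 i0) //=.
    have h1 : \sum_(j in C) ((b j)%:Z - 2) <= \sum_(j in supp D | j != i0) ((b j)%:Z - 2).
      rewrite big_mkcond [X in _ <= X]big_mkcond /=; apply ler_sum => j _.
      case jC: (j \in C).
        by have := subsetP CS j jC; rewrite inE => ->.
      by case: ifP => _ //; have := b_ge2 j; lia.
    apply: (le_lt_trans h1); rewrite -[X in X < _]add0r ltrD2r; have := bi0; lia.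
Qed.
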